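(* Let $\mathcal D=(C_1,C_2,C_3,C_4)$ be any ordered, oriented Descartes configuration and fix $i\in\{1,2,3,4\}$. Let $C_i'$ be the unique circle (or line), different from $C_i$, that is tangent to the three circles $C_j$, $j\neq i$, at points distinct from their mutual tangency points, and orient it so that the configuration $\mathcal D'$ obtained from $\mathcal D$ by replacing $C_i$ with $C_i'$ (keeping the other three oriented circles) is an oriented Descartes configuration. Then $\mathbf W_{\mathcal D'}=\mathbf S_i\mathbf W_{\mathcal D}$, where $\mathbf S_i$ is the $4\times4$ matrix that agrees with the identity except in row $i$, whose entries are $-1$ in position $i$ and $2$ in the other three positions. (Equivalently, $\mathcal D'$ is the image of $\mathcal D$ under inversion in the circle through the three tangency points of $\mathcal D$ not lying on $C_i$.)
   Context: Oriented circles: radius $r$, oriented curvature $\pm1/r$, $+$ iff the interior is the bounded open disk; oriented lines have curvature $0$, unit normal $\mathbf h$, interior the open half-plane into which $\mathbf h$ points. A Descartes configuration: four mutually tangent circles/lines with six distinct tangency points (parallel lines tangent at $\infty$); oriented if the four interiors are pairwise disjoint or become so after reversing all orientations. Augmented curvature-center coordinates: for center $\mathbf c$ and oriented radius $r$, $\mathbf w(C)=((|\mathbf c|^2-r^2)/r,1/r,c_1/r,c_2/r)$; for the line $\mathbf x\cdot\mathbf h=m$ with interior-pointing unit normal $\mathbf h$, $\mathbf w(C)=(2m,0,h_1,h_2)$. $\mathbf W_{\mathcal D}$ is the $4\times4$ matrix with $i$-th row $\mathbf w(C_i)$. *)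

(* Defs.v *)
From HB Require Import structures.
From mathcomp Require Import all_boot all_order all_algebra.
From mathcomp Require Import reals.
Set Implicit Arguments. Unset Strict Implicit. Unset Printing Implicit Defensive.
Import Order.TTheory GRing.Theory Num.Theory.
Local Open Scope ring_scope.

Section Descartes.
Variable R : realType.

Definition point := (R * R)%type.

(* OCirc c1 c2 r : circle of center (c1,c2), radius |r|, oriented radius r
     (r > 0 : interior is the bounded open disk; r < 0 : interior is the
      complement of the closed disk).
   OLine h1 h2 m : the line x . h = m with unit normal h = (h1,h2) pointing
     into the interior, the open half-plane x . h > m. *)
Inductive ocircle :=
  | OCirc of R & R & R
  | OLine of R & R & R.

Definition valid (C : ocircle) : Prop :=
  match C with
  | OCirc _ _ r => r != 0
  | OLine h1 h2 _ => h1 ^+ 2 + h2 ^+ 2 = 1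
  end.

Definition is_line (C : ocircle) : Prop :=
  match C with OLine _ _ _ => True | _ => False end.

Definition on (C : ocircle) (p : point) : Prop :=
  match C with
  | OCirc c1 c2 r => (p.1 - c1) ^+ 2 + (p.2 - c2) ^+ 2 = r ^+ 2
  | OLine h1 h2 m => p.1 * h1 + p.2 * h2 = m
  end.

Definition interior (C : ocircle) (p : point) : Prop :=
  match C with
  | OCirc c1 c2 r =>
      if 0 < r then (p.1 - c1) ^+ 2 + (p.2 - c2) ^+ 2 < r ^+ 2
      else r ^+ 2 < (p.1 - c1) ^+ 2 + (p.2 - c2) ^+ 2
  | OLine h1 h2 m => m < p.1 * h1 + p.2 * h2
  end.

Definition reverse (C : ocircle) : ocircle :=
  match C with
  | OCirc c1 c2 r => OCirc c1 c2 (- r)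
  | OLine h1 h2 m => OLine (- h1) (- h2) (- m)
  end.

(* tangency points live in the extended plane: Some p is a finite point,
   None is the point at infinity. *)
Definition tangent_at (C D : ocircle) (q : option point) : Prop :=
  match q with
  | Some p => ~ (is_line C /\ is_line D) /\
              (forall y, (on C y /\ on D y) <-> y = p)
  | None => is_line C /\ is_line D /\ (forall y, ~ (on C y /\ on D y))
  end.

Definition tangent (C D : ocircle) : Prop := exists q, tangent_at C D q.

Definition descartes (D : 'I_4 -> ocircle) : Prop :=
  (forall i, valid (D i)) /\
  (forall i j, i != j -> tangent (D i) (D j)) /\
  (forall i j k l q q', i != j -> k != l ->
      tangent_at (D i) (D j) q -> tangent_at (D k) (D l) q' -> q = q' ->
      [set i; j] = [set k; l]).

Definition disjoint_interiors (D : 'I_4 -> ocircle) : Prop :=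
  forall i j, i != j -> forall p, ~ (interior (D i) p /\ interior (D j) p).

Definition oriented_descartes (D : 'I_4 -> ocircle) : Prop :=
  descartes D /\
  (disjoint_interiors D \/ disjoint_interiors (fun i => reverse (D i))).

Definition wvec (C : ocircle) : seq R :=
  match C with
  | OCirc c1 c2 r => [:: (c1 ^+ 2 + c2 ^+ 2 - r ^+ 2) / r; r^-1; c1 / r; c2 / r]
  | OLine h1 h2 m => [:: 2 * m; 0; h1; h2]
  end.

Definition Wmx (D : 'I_4 -> ocircle) : 'M[R]_4 :=
  \matrix_(i, j) nth 0 (wvec (D i)) j.

Definition Smx (i : 'I_4) : 'M[R]_4 :=
  \matrix_(k, l) if k == i then (if l == i then -1 else 2)
                 else (k == l)%:R.

Definition replace (D : 'I_4 -> ocircle) (i : 'I_4) (C : ocircle) :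
  'I_4 -> ocircle := fun j => if j == i then C else D j.

Definition is_reflected (D : 'I_4 -> ocircle) (i : 'I_4) (C : ocircle) : Prop :=
  valid C /\
  (exists p, on C p <> on (D i) p) /\
  (forall j, j != i -> tangent C (D j)) /\
  (forall j k l q q', j != i -> k != i -> l != i -> k != l ->
      tangent_at C (D j) q -> tangent_at (D k) (D l) q' -> q <> q') /\
  oriented_descartes (replace D i C).

End Descartes.

(* Main.v *)
Require Import Defs.
From HB Require Import structures.
From mathcomp Require Import all_boot all_order all_algebra.
From mathcomp Require Import reals ring lra.
Set Implicit Arguments. Unset Strict Implicit. Unset Printing Implicit Defensive.
Import Order.TTheory GRing.Theory Num.Theory.
Local Open Scope ring_scope.

Section S.
Variable R : realType.
Definition o0 : 'I_4 := @Ordinal 4 0 isT.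
Definition o1 : 'I_4 := @Ordinal 4 1 isT.
Definition o2 : 'I_4 := @Ordinal 4 2 isT.
Definition o3 : 'I_4 := @Ordinal 4 3 isT.

Lemma ord4_cases (i : 'I_4) : i = o0 \/ i = o1 \/ i = o2 \/ i = o3.
Proof.
case: i => [[|[|[|[|m]]]] Hm].
- by left; apply/val_inj.
- by right; left; apply/val_inj.
- by right; right; left; apply/val_inj.
- by right; right; right; apply/val_inj.
- by [].
Qed.

Lemma sum4 (F : 'I_4 -> R) : \sum_k F k = F o0 + F o1 + F o2 + F o3.
Proof.
rewrite !big_ord_recr big_ord0 /= add0r.
by congr (_ + _ + _ + _); congr F; apply/val_inj.
Qed.

Definition vec := 'rV[R]_4.
Definition cc (x : vec) (k : 'I_4) := x ord0 k.

Definition B (x z : vec) : R :=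
  cc x o2 * cc z o2 + cc x o3 * cc z o3 - (cc x o0 * cc z o1 + cc x o1 * cc z o0) / 2.

Definition qf (a b : 'I_4) : R :=
  if ((a == o0) && (b == o1)) || ((a == o1) && (b == o0)) then - (1/2)
  else if (a == b) && ((a == o2) || (a == o3)) then 1 else 0.
Definition Qm : 'M[R]_4 := \matrix_(a, b) qf a b.

Lemma BM x z : B x z = (x *m Qm *m z^T) ord0 ord0.
Proof.
rewrite !mxE sum4 !mxE !sum4 !mxE /B /cc /qf /=.
rewrite /=. ring.
Qed.

Lemma QmT : Qm^T = Qm.
Proof.
apply/matrixP => a b; rewrite !mxE /qf.
by case: (ord4_cases a) => [->|[->|[->|->]]]; case: (ord4_cases b) => [->|[->|[->|->]]].
Qed.

Definition Gm : 'M[R]_4 := \matrix_(a, b) if a == b then 1 else -1.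

Lemma GmGm : Gm *m Gm = 4%:M.
Proof.
apply/matrixP => a b; rewrite !mxE sum4 !mxE.
case: (ord4_cases a) => [->|[->|[->|->]]]; case: (ord4_cases b) => [->|[->|[->|->]]]; rewrite /=; ring.
Qed.

Lemma quadG (y : 'cV[R]_4) : 4 * (y^T *m (4^-1 *: Gm) *m y) ord0 ord0
   = 2 * \sum_k (y k ord0)^+2 - (\sum_k y k ord0)^+2.
Proof. rewrite mxE !sum4 !mxE !sum4 !mxE /=. by field. Qed.

Section Fam.
Variable f : 'I_4 -> vec.
Hypothesis gram : forall a b, B (f a) (f b) = if a == b then 1 else -1.
Definition Wf : 'M[R]_4 := \matrix_(k, j) f k ord0 j.

Lemma WQW : Wf *m Qm *m Wf^T = Gm.
Proof.
apply/matrixP => a b.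
rewrite [RHS]mxE -gram BM !mxE; apply: eq_bigr => j _; rewrite !mxE; congr (_ * _).
by apply: eq_bigr => l _; rewrite !mxE.
Qed.

Definition Mi : 'M[R]_4 := (4^-1) *: (Wf^T *m Gm).

Lemma Minv : Mi *m (Wf *m Qm) = 1%:M.
Proof.
apply: mulmx1C.
rewrite /Mi -scalemxAr mulmxA WQW GmGm.
apply/matrixP => a b; rewrite !mxE.
case: (a == b) => /=; last by rewrite mulr0n mulr0.
by rewrite mulr1n; field.
Qed.

Lemma yE n k : (Wf *m Qm *m n^T) k ord0 = B (f k) n.
Proof.
rewrite BM !mxE; apply: eq_bigr => j _; rewrite !mxE; congr (_ * _).
by apply: eq_bigr => l _; rewrite !mxE.
Qed.

Lemma L1 n : (forall k, B (f k) n = 0) -> n = 0.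
Proof.
move=> H.
have Hy : Wf *m Qm *m n^T = 0.
  by apply/matrixP => a b; rewrite (ord1 b) yE H mxE.
apply: trmx_inj; rewrite trmx0 -[n^T]mul1mx -Minv -mulmxA Hy.
by rewrite mulmx0.
Qed.

Lemma L2 n : 4 * B n n = 2 * \sum_k (B (f k) n) ^+ 2 - (\sum_k B (f k) n) ^+ 2.
Proof.
have Hy : forall k, (Wf *m Qm *m n^T) k ord0 = B (f k) n by move=> k; rewrite yE.
have E1 : B n n = ((Wf *m Qm *m n^T)^T *m ((4^-1) *: Gm) *m (Wf *m Qm *m n^T)) ord0 ord0.
  rewrite BM trmx_mul trmx_mul trmxK QmT.
  have -> : n *m (Qm *m Wf^T) *m (4^-1 *: Gm) = n *m Qm *m Mi.
    by rewrite /Mi -!mulmxA scalemxAr.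
  by rewrite -[n *m Qm *m Mi *m _]mulmxA (mulmxA Mi) Minv mul1mx.
by rewrite E1 quadG !sum4 !Hy.
Qed.
End Fam.

Definition mk4 (a b c d : R) : vec := \row_j nth 0 [:: a; b; c; d] j.
Definition wv (C : ocircle R) : vec := \row_j nth 0 (wvec C) j.
Definition nv (q : option (point R)) : vec :=
  match q with
  | Some p => mk4 (p.1 ^+ 2 + p.2 ^+ 2) 1 p.1 p.2
  | None => mk4 1 0 0 0
  end.

Lemma wvC a b r : wv (OCirc a b r) = mk4 ((a ^+ 2 + b ^+ 2 - r ^+ 2) / r) r^-1 (a / r) (b / r).
Proof. by []. Qed.
Lemma wvL h1 h2 m : wv (OLine h1 h2 m) = mk4 (2 * m) 0 h1 h2.
Proof. by []. Qed.

Lemma Bmk4 a b c d a' b' c' d' :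
  B (mk4 a b c d) (mk4 a' b' c' d') = c * c' + d * d' - (a * b' + b * a') / 2.
Proof. by rewrite /B /cc !mxE. Qed.

Lemma Bsym x z : B x z = B z x.
Proof. rewrite /B; ring. Qed.
Lemma BDl x y z : B (x + y) z = B x z + B y z.
Proof. rewrite /B /cc !mxE; ring. Qed.
Lemma BNl x z : B (- x) z = - B x z.
Proof. rewrite /B /cc !mxE; ring. Qed.
Lemma BZl a x z : B (a *: x) z = a * B x z.
Proof. rewrite /B /cc !mxE; ring. Qed.
Lemma B0l z : B 0 z = 0.
Proof. rewrite /B /cc !mxE; ring. Qed.
Lemma BBl x y z : B (x - y) z = B x z - B y z.
Proof. by rewrite BDl BNl. Qed.
Lemma Bsuml (I : Type) (r : seq I) (P : pred I) (F : I -> vec) z :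
  B (\sum_(l <- r | P l) F l) z = \sum_(l <- r | P l) B (F l) z.
Proof.
elim/big_rec2: _ => [|l y1 y2 _ <-]; first exact: B0l.
by rewrite BDl.
Qed.
Lemma BDr x y z : B z (x + y) = B z x + B z y.
Proof. by rewrite Bsym BDl Bsym (Bsym y). Qed.
Lemma BNr x z : B z (- x) = - B z x.
Proof. by rewrite Bsym BNl Bsym. Qed.
Lemma BBr x y z : B z (x - y) = B z x - B z y.
Proof. by rewrite BDr BNr. Qed.

Lemma BCC a b r a' b' r' : r != 0 -> r' != 0 ->
  B (wv (OCirc a b r)) (wv (OCirc a' b' r')) =
  (r ^+ 2 + r' ^+ 2 - ((a - a') ^+ 2 + (b - b') ^+ 2)) / (2 * r * r').
Proof. move=> hr hr'; rewrite !wvC Bmk4; field; rewrite hr hr' //. Qed.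

Lemma BCL a b r h1 h2 m : r != 0 ->
  B (wv (OCirc a b r)) (wv (OLine h1 h2 m)) = (a * h1 + b * h2 - m) / r.
Proof. move=> hr; rewrite wvC wvL Bmk4; field; rewrite hr //. Qed.

Lemma BLL h1 h2 m h1' h2' m' :
  B (wv (OLine h1 h2 m)) (wv (OLine h1' h2' m')) = h1 * h1' + h2 * h2'.
Proof. rewrite !wvL Bmk4; ring. Qed.

Lemma BCn a b r p : r != 0 ->
  B (wv (OCirc a b r)) (nv (Some p)) = (r ^+ 2 - ((p.1 - a) ^+ 2 + (p.2 - b) ^+ 2)) / (2 * r).
Proof. move=> hr; rewrite wvC /nv Bmk4; field; rewrite hr //. Qed.

Lemma BLn h1 h2 m p : B (wv (OLine h1 h2 m)) (nv (Some p)) = p.1 * h1 + p.2 * h2 - m.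
Proof. rewrite wvL /nv Bmk4; by field. Qed.

Lemma BLinf h1 h2 m : B (wv (OLine h1 h2 m)) (nv None) = 0.
Proof. rewrite wvL /nv Bmk4; by field. Qed.

Lemma nv_null q : B (nv q) (nv q) = 0.
Proof. case: q => [p|]; rewrite /nv Bmk4; by field. Qed.

Lemma nv_neq0 q : nv q != 0.
Proof.
apply/eqP => h.
case: q h => [p|] h.
- have := congr1 (fun x : vec => x ord0 o1) h; rewrite !mxE /=; apply/eqP; exact: oner_neq0.
- have := congr1 (fun x : vec => x ord0 o0) h; rewrite !mxE /=; apply/eqP; exact: oner_neq0.
Qed.

Lemma wv_rev C : wv (reverse C) = - wv C.
Proof.
apply/rowP => j; rewrite !mxE.
case: C => [a b r|h1 h2 m] /=; case: (ord4_cases j) => [->|[->|[->|->]]] /=;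
  rewrite ?invrN ?mulrN ?mulNr ?opprK ?sqrrN //; ring.
Qed.

Lemma valid_rev (C : ocircle R) : valid C -> valid (reverse C).
Proof. by case: C => [a b r|h1 h2 m] /=; rewrite ?oppr_eq0 ?sqrrN. Qed.

Lemma Bself C : valid C -> B (wv C) (wv C) = 1.
Proof.
case: C => [a b r|h1 h2 m] /= h.
- rewrite BCC // !subrr expr0n /= !addr0 subr0; field; rewrite h //.
- by rewrite BLL -!expr2.
Qed.

Lemma posdiv (x r : R) : r != 0 -> (0 < x / (2 * r)) = (0 < x * r).
Proof.
move=> hr.
have -> : x / (2 * r) = (x * r) * (2 * r ^+ 2)^-1 by field.
rewrite pmulr_lgt0 // invr_gt0 mulr_gt0 // exprn_even_gt0 //.
Qed.

Lemma eqdiv0 (x r : R) : r != 0 -> (x / (2 * r) == 0) = (x == 0).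
Proof. by move=> hr; rewrite mulf_eq0 invr_eq0 mulf_eq0 (negbTE hr) pnatr_eq0 !orbF. Qed.


Lemma on_B (C : ocircle R) p : valid C -> on C p <-> B (wv C) (nv (Some p)) = 0.
Proof.
case: C => [a b r|h1 h2 m] /= hv.
- rewrite BCn //; split => [->|/eqP]; first by rewrite subrr mul0r.
  by rewrite eqdiv0 // subr_eq0 => /eqP ->.
- rewrite BLn; split => [->|h]; first by rewrite subrr.
  by apply/eqP; rewrite -subr_eq0 h.
Qed.

Lemma interior_B (C : ocircle R) p : valid C -> interior C p <-> 0 < B (wv C) (nv (Some p)).
Proof.
case: C => [a b r|h1 h2 m] /= hv.
- rewrite BCn // posdiv //.
  set d := (p.1 - a) ^+ 2 + (p.2 - b) ^+ 2.
  case: (ltrP 0 r) => hr.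
  + by split => h; nra.
  + have hr' : r < 0 by rewrite lt_neqAle hv hr.
    by split => h; nra.
- by rewrite BLn subr_gt0.
Qed.

Lemma interior_rev_B (C : ocircle R) p : valid C ->
  interior (reverse C) p <-> B (wv C) (nv (Some p)) < 0.
Proof.
move=> hv; have := interior_B p (valid_rev hv); rewrite wv_rev BNl oppr_gt0 //.
Qed.

Lemma on_exists (C : ocircle R) : valid C -> exists p, on C p.
Proof.
case: C => [a b r|h1 h2 m] /= hv.
- by exists (a + r, b) => /=; rewrite addrAC subrr add0r subrr expr0n addr0.
- exists (m * h1, m * h2) => /=.
  by rewrite -!mulrA -mulrDr -!expr2 hv mulr1.
Qed.

Lemma wv_inj (C D : ocircle R) : valid C -> valid D -> wv C = wv D -> C = D.
Proof.
have e : forall x y : vec, x = y -> forall j, cc x j = cc y j by move=> x y ->.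
case: C => [a b r|h1 h2 m]; case: D => [a' b' r'|h1' h2' m'] /= hv hv' h;
  have k1 := e _ _ h o1; have k2 := e _ _ h o2; have k3 := e _ _ h o3;
  have k0 := e _ _ h o0; move: k0 k1 k2 k3; rewrite /cc !mxE /=.
- move=> _ /(congr1 GRing.inv); rewrite !invrK => -> ha hb.
  by rewrite -(divfK hv' a) ha divfK // -(divfK hv' b) hb divfK.
- by move=> _ /eqP; rewrite invr_eq0 (negbTE hv).
- by move=> _ /eqP; rewrite eq_sym invr_eq0 (negbTE hv').
- move=> hm _ -> ->; congr OLine.
  lra.
Qed.


Lemma tanat_sym (C D : ocircle R) q : tangent_at C D q -> tangent_at D C q.
Proof.
case: q => [p|] /=.
- move=> [h1 h2]; split; first by case=> x y; apply: h1.
  by move=> y; rewrite -h2; split; case.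
- move=> [l1 [l2 h]]; split => //; split => // y [u v]; exact: (h y).
Qed.

Lemma tanat_B (C D : ocircle R) q : valid C -> valid D -> tangent_at C D q ->
  B (wv C) (nv q) = 0 /\ B (wv D) (nv q) = 0.
Proof.
move=> hC hD; case: q => [p|].
- move=> [_ H]; have [h1 h2] := (H p).2 erefl.
  by split; [apply/(on_B p hC) | apply/(on_B p hD)].
- move=> [l1 [l2 _]].
  case: C hC l1 => [a b r|h1 h2 m] // _ _.
  case: D hD l2 => [a' b' r'|h1' h2' m'] // _ _.
  by rewrite !BLinf.
Qed.

Lemma two_neq0 : (2 : R) != 0.
Proof. by rewrite pnatr_eq0. Qed.

Lemma sos0 (x y : R) : x ^+ 2 + y ^+ 2 = 0 -> x = 0 /\ y = 0.
Proof.
move/eqP; rewrite paddr_eq0 ?sqr_ge0 // !sqrf_eq0 => /andP [/eqP -> /eqP ->] //.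
Qed.

Lemma sq_div1 (X Y : R) : Y != 0 -> X ^+ 2 = Y ^+ 2 -> (X / Y) ^+ 2 = 1.
Proof. by move=> hY hX; rewrite expr_div_n hX divff // expf_neq0. Qed.

Lemma tanB2_CC a b r a' b' r' q : r != 0 -> r' != 0 ->
  tangent_at (OCirc a b r) (OCirc a' b' r') q ->
  B (wv (OCirc a b r)) (wv (OCirc a' b' r')) ^+ 2 = 1.
Proof.
move=> hr hr'; case: q => [[p1 p2]|] /=; last by case.
move=> [_ H].
have [hC hD] := (H (p1, p2)).2 erefl; simpl in hC, hD.
rewrite BCC //.
have [E0|E0] := eqVneq ((a' - a) ^+ 2 + (b' - b) ^+ 2) 0.
  have [ea eb] := sos0 E0.
  have ea' : a' = a by apply/eqP; rewrite -subr_eq0 ea.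
  have eb' : b' = b by apply/eqP; rewrite -subr_eq0 eb.
  subst a' b'.
  have := (H (2 * a - p1, 2 * b - p2)).1; rewrite /=.
  have -> : (2 * a - p1 - a) ^+ 2 + (2 * b - p2 - b) ^+ 2 = (p1 - a) ^+ 2 + (p2 - b) ^+ 2 by ring.
  move=> /(_ (conj hC hD)) [e1 e2].
  have : r ^+ 2 = 0 by rewrite -hC; nra.
  by move/eqP; rewrite expf_eq0 (negbTE hr) andbF.
set E := (a' - a) ^+ 2 + (b' - b) ^+ 2 in E0.
set k := ((p1 - a) * (a' - a) + (p2 - b) * (b' - b)) / E.
have := (H (2 * a - p1 + 2 * k * (a' - a), 2 * b - p2 + 2 * k * (b' - b))).1; rewrite /=.
have -> : (2 * a - p1 + 2 * k * (a' - a) - a) ^+ 2 + (2 * b - p2 + 2 * k * (b' - b) - b) ^+ 2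
   = (p1 - a) ^+ 2 + (p2 - b) ^+ 2 by rewrite /k /E; field.
have -> : (2 * a - p1 + 2 * k * (a' - a) - a') ^+ 2 + (2 * b - p2 + 2 * k * (b' - b) - b') ^+ 2
   = (p1 - a') ^+ 2 + (p2 - b') ^+ 2 by rewrite /k /E; field.
move=> /(_ (conj hC hD)) [e1 e2].
have hp1 : p1 = a + k * (a' - a) by lra.
have hp2 : p2 = b + k * (b' - b) by lra.
apply: sq_div1; first by rewrite !mulf_neq0 ?two_neq0.
have -> : (2 * r * r') ^+ 2 = 4 * r ^+ 2 * r' ^+ 2 by ring.
rewrite -hC -hD hp1 hp2; ring.
Qed.


Lemma tanB2_CL a b r h1 h2 m q : r != 0 -> h1 ^+ 2 + h2 ^+ 2 = 1 ->
  tangent_at (OCirc a b r) (OLine h1 h2 m) q ->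
  B (wv (OCirc a b r)) (wv (OLine h1 h2 m)) ^+ 2 = 1.
Proof.
move=> hr hv; case: q => [[p1 p2]|] /=; last by case.
move=> [_ H].
have [hC hL] := (H (p1, p2)).2 erefl; simpl in hC, hL.
rewrite BCL //.
set s := - (p1 - a) * h2 + (p2 - b) * h1.
have := (H (p1 + 2 * s * h2, p2 - 2 * s * h1)).1; rewrite /=.
have -> : (p1 + 2 * s * h2 - a) ^+ 2 + (p2 - 2 * s * h1 - b) ^+ 2
   = (p1 - a) ^+ 2 + (p2 - b) ^+ 2 + 4 * s ^+ 2 * (h1 ^+ 2 + h2 ^+ 2 - 1) by rewrite /s; ring.
have -> : (p1 + 2 * s * h2) * h1 + (p2 - 2 * s * h1) * h2 = p1 * h1 + p2 * h2 by ring.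
rewrite hv subrr mulr0 addr0.
move=> /(_ (conj hC hL)) [e1 e2].
have hs1 : s * h1 = 0 by lra.
have hs2 : s * h2 = 0 by lra.
have hs : s = 0.
  have -> : s = s * (h1 ^+ 2 + h2 ^+ 2) by rewrite hv mulr1.
  have -> : s * (h1 ^+ 2 + h2 ^+ 2) = (s * h1) * h1 + (s * h2) * h2 by ring.
  by rewrite hs1 hs2 !mul0r addr0.
apply: sq_div1 => //.
rewrite -hL -hC.
have -> : (a * h1 + b * h2 - (p1 * h1 + p2 * h2)) ^+ 2 =
   ((p1 - a) ^+ 2 + (p2 - b) ^+ 2) * (h1 ^+ 2 + h2 ^+ 2) - s ^+ 2 by rewrite /s; ring.
by rewrite hv hs mulr1 expr0n subr0.
Qed.

Lemma tanB2_LL h1 h2 m h1' h2' m' q : h1 ^+ 2 + h2 ^+ 2 = 1 -> h1' ^+ 2 + h2' ^+ 2 = 1 ->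
  tangent_at (OLine h1 h2 m) (OLine h1' h2' m') q ->
  B (wv (OLine h1 h2 m)) (wv (OLine h1' h2' m')) ^+ 2 = 1.
Proof.
move=> hv hv'; case: q => [p|] /=; first by case=> /(_ (conj I I)).
move=> [_ [_ H]].
rewrite BLL.
set d := h1 * h2' - h2 * h1'.
have [d0|dn] := eqVneq d 0.
  have -> : (h1 * h1' + h2 * h2') ^+ 2 = (h1 ^+ 2 + h2 ^+ 2) * (h1' ^+ 2 + h2' ^+ 2) - d ^+ 2
    by rewrite /d; ring.
  by rewrite hv hv' d0 expr0n subr0 mulr1.
exfalso; apply: (H ((m * h2' - m' * h2) / d, (h1 * m' - h1' * m) / d)) => /=.
by split; rewrite /d; field; rewrite -/d dn.
Qed.


Lemma tanB2 (C D : ocircle R) : valid C -> valid D -> tangent C D ->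
  B (wv C) (wv D) ^+ 2 = 1.
Proof.
move=> hC hD [q hq].
case: C hC hq => [a b r|h1 h2 m]; case: D hD => [a' b' r'|h1' h2' m'] /= hD hC hq.
- exact: tanB2_CC hq.
- exact: tanB2_CL hq.
- rewrite Bsym; exact: tanB2_CL (tanat_sym hq).
- exact: tanB2_LL hq.
Qed.


Lemma pos3 (x y z : R) : 0 < x -> 0 < y -> 0 < z -> 0 < x * y * z.
Proof. by move=> *; rewrite !mulr_gt0. Qed.

Lemma B1_CC (a b r a' b' r' : R) : r != 0 -> r' != 0 ->
  r ^+ 2 + r' ^+ 2 - ((a - a') ^+ 2 + (b - b') ^+ 2) = 2 * r * r' ->
  exists p : point R, 0 < (r ^+ 2 - ((p.1 - a) ^+ 2 + (p.2 - b) ^+ 2)) * r /\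
                      0 < (r' ^+ 2 - ((p.1 - a') ^+ 2 + (p.2 - b') ^+ 2)) * r'.
Proof.
move=> hr hr' hX.
have hE2 : (a - a') ^+ 2 + (b - b') ^+ 2 = r ^+ 2 + r' ^+ 2 - 2 * r * r' by lra.
have hE3 : (a' - a) ^+ 2 + (b' - b) ^+ 2 = r ^+ 2 + r' ^+ 2 - 2 * r * r'.
  by rewrite -hE2; ring.
have pA : 0 < r -> (0 < r' /\ r <= r') \/ r' < 0 -> exists p : point R,
   0 < (r ^+ 2 - ((p.1 - a) ^+ 2 + (p.2 - b) ^+ 2)) * r /\
   0 < (r' ^+ 2 - ((p.1 - a') ^+ 2 + (p.2 - b') ^+ 2)) * r'.
  move=> r0 hc; exists (a, b) => /=; rewrite !subrr expr0n addr0 subr0 hE2; split.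
    by rewrite mulr_gt0 // exprn_gt0.
  case: hc => [[r0' rr]|r1].
    have -> : (r' ^+ 2 - (r ^+ 2 + r' ^+ 2 - 2 * r * r')) * r' = r * r' * (2 * r' - r) by ring.
    by apply: pos3 => //; lra.
  have -> : (r' ^+ 2 - (r ^+ 2 + r' ^+ 2 - 2 * r * r')) * r' = r * (- r') * (r - 2 * r') by ring.
  by apply: pos3 => //; lra.
have pB : 0 < r' -> (0 < r /\ r' <= r) \/ r < 0 -> exists p : point R,
   0 < (r ^+ 2 - ((p.1 - a) ^+ 2 + (p.2 - b) ^+ 2)) * r /\
   0 < (r' ^+ 2 - ((p.1 - a') ^+ 2 + (p.2 - b') ^+ 2)) * r'.
  move=> r0 hc; exists (a', b') => /=; rewrite !subrr expr0n addr0 subr0 hE3; split; last first.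
    by rewrite mulr_gt0 // exprn_gt0.
  case: hc => [[r0' rr]|r1].
    have -> : (r ^+ 2 - (r ^+ 2 + r' ^+ 2 - 2 * r * r')) * r = r' * r * (2 * r - r') by ring.
    by apply: pos3 => //; lra.
  have -> : (r ^+ 2 - (r ^+ 2 + r' ^+ 2 - 2 * r * r')) * r = r' * (- r) * (r' - 2 * r) by ring.
  by apply: pos3 => //; lra.
have [r0|r0] := ltrP 0 r; have [r0'|r0'] := ltrP 0 r'.
- have [rr|rr] := lerP r r'.
  + by apply: pA => //; left.
  + by apply: pB => //; left; split => //; apply: ltW.
- have r1 : r' < 0 by rewrite lt_neqAle hr' r0'.
  by apply: pA => //; right.
- have r1 : r < 0 by rewrite lt_neqAle hr r0.
  by apply: pB => //; right.
- have r1 : r < 0 by rewrite lt_neqAle hr r0.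
  have r1' : r' < 0 by rewrite lt_neqAle hr' r0'.
  set T := 1 + r ^+ 2 + r' ^+ 2 + (a - a') ^+ 2 + (b - b') ^+ 2.
  exists (a + T, b) => /=.
  have sa : 0 <= (a - a') ^+ 2 := sqr_ge0 _.
  have sb : 0 <= (b - b') ^+ 2 := sqr_ge0 _.
  split.
  + have -> : a + T - a = T by ring.
    rewrite subrr expr0n addr0.
    have h1 : 0 < T + r by rewrite /T; nra.
    have h2 : 0 < T - r by rewrite /T; nra.
    have -> : (r ^+ 2 - T ^+ 2) * r = (T + r) * (T - r) * (- r) by ring.
    by apply: pos3 => //; lra.
  + have -> : a + T - a' = T + (a - a') by ring.
    have q1 := sqr_ge0 (a - a' + 1/2).
    have q2 := sqr_ge0 (r' + 1/2).
    have q3 := sqr_ge0 (r' - 1/2).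
    have h1 : 0 < T + (a - a') + r' by rewrite /T; nra.
    have h2 : 0 < T + (a - a') - r' by rewrite /T; nra.
    have -> : (r' ^+ 2 - ((T + (a - a')) ^+ 2 + (b - b') ^+ 2)) * r' =
      ((T + (a - a') + r') * (T + (a - a') - r') + (b - b') ^+ 2) * (- r') by ring.
    apply: mulr_gt0; last by lra.
    by apply: ltr_wpDr => //; apply: mulr_gt0.
Qed.


Lemma B1_CL (a b r h1 h2 m : R) : r != 0 -> h1 ^+ 2 + h2 ^+ 2 = 1 ->
  a * h1 + b * h2 - m = r ->
  exists p : point R, 0 < (r ^+ 2 - ((p.1 - a) ^+ 2 + (p.2 - b) ^+ 2)) * r /\
                      0 < p.1 * h1 + p.2 * h2 - m.
Proof.
move=> hr hv hX.
have [r0|r0] := ltrP 0 r.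
  exists (a, b) => /=; rewrite !subrr expr0n addr0 subr0 hX; split => //.
  by rewrite mulr_gt0 // exprn_gt0.
have r1 : r < 0 by rewrite lt_neqAle hr r0.
set t := 1 - 2 * r.
exists (a + t * h1, b + t * h2) => /=; split.
  have -> : (r ^+ 2 - ((a + t * h1 - a) ^+ 2 + (b + t * h2 - b) ^+ 2)) * r
    = (t + r) * (t - r) * (- r) * (h1 ^+ 2 + h2 ^+ 2) + (1 - (h1 ^+ 2 + h2 ^+ 2)) * r ^+ 2 * r by ring.
  rewrite hv subrr !mul0r addr0 mulr1.
  by apply: pos3; rewrite /t; lra.
have -> : (a + t * h1) * h1 + (b + t * h2) * h2 - m = (a * h1 + b * h2 - m) + t * (h1 ^+ 2 + h2 ^+ 2) by ring.
by rewrite hv hX mulr1 /t; lra.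
Qed.

Lemma B1_int (C D : ocircle R) : valid C -> valid D -> B (wv C) (wv D) = 1 ->
  exists p, 0 < B (wv C) (nv (Some p)) /\ 0 < B (wv D) (nv (Some p)).
Proof.
have key : forall a b r (L : ocircle R), r != 0 -> valid L -> B (wv (OCirc a b r)) (wv L) = 1 ->
  exists p, 0 < B (wv (OCirc a b r)) (nv (Some p)) /\ 0 < B (wv L) (nv (Some p)).
  move=> a b r [a' b' r'|h1 h2 m] hr /= hv h.
  - move: h; rewrite BCC // => /(congr1 (fun z => z * (2 * r * r'))).
    rewrite divfK ?mul1r; last by rewrite !mulf_neq0 ?two_neq0.
    move=> hX; have [p [p1 p2]] := B1_CC hr hv hX.
    by exists p; rewrite !BCn // !posdiv.
  - move: h; rewrite BCL // => /(congr1 (fun z => z * r)).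
    rewrite divfK // mul1r => hX; have [p [p1 p2]] := B1_CL hr hv hX.
    by exists p; rewrite BCn // posdiv // BLn.
case: C => [a b r|h1 h2 m] hC hD h.
  exact: key.
case: D hD h => [a' b' r'|h1' h2' m'] hD h.
  rewrite Bsym in h; have [p [p1 p2]] := key _ _ _ _ hD hC h.
  by exists p.
move: h; rewrite BLL => h.
set t := 1 + m ^+ 2 + m' ^+ 2.
exists (t * h1, t * h2); rewrite !BLn /=.
have -> : t * h1 * h1 + t * h2 * h2 - m = t * (h1 ^+ 2 + h2 ^+ 2) - m by ring.
have -> : t * h1 * h1' + t * h2 * h2' - m' = t * (h1 * h1' + h2 * h2') - m' by ring.
rewrite h hC mulr1 /t; split; nra.
Qed.


Lemma sq1 (x : R) : x ^+ 2 = 1 -> x = 1 \/ x = -1.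
Proof.
move=> h; have : (x - 1) * (x + 1) = 0.
  have -> : (x - 1) * (x + 1) = x ^+ 2 - 1 by ring.
  by rewrite h subrr.
by move/eqP; rewrite mulf_eq0 subr_eq0 addr_eq0 => /orP [/eqP|/eqP]; [left|right].
Qed.

Lemma gram_OD (E : 'I_4 -> ocircle R) : oriented_descartes E ->
  forall a b, B (wv (E a)) (wv (E b)) = if a == b then 1 else -1.
Proof.
move=> [[hv [ht _]] hd] a b.
have [<-|ab] := eqVneq a b; first exact: Bself.
have [h1|//] := sq1 (tanB2 (hv a) (hv b) (ht a b ab)).
exfalso; case: hd => hd.
- have [p [p1 p2]] := B1_int (hv a) (hv b) h1.
  by apply: (hd a b ab p); split; apply/interior_B.
- have h1' : B (wv (reverse (E a))) (wv (reverse (E b))) = 1 by rewrite !wv_rev BNl BNr opprK.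
  have [p [p1 p2]] := B1_int (valid_rev (hv a)) (valid_rev (hv b)) h1'.
  by apply: (hd a b ab p); split; apply/interior_B => //; apply: valid_rev.
Qed.


Lemma TT_CC (a b r a' b' r' : R) : r != 0 -> r' != 0 -> r + r' != 0 ->
  r ^+ 2 + r' ^+ 2 - ((a - a') ^+ 2 + (b - b') ^+ 2) = - (2 * r * r') ->
  tangent (OCirc a b r) (OCirc a' b' r').
Proof.
move=> hr hr' hs hX.
set s := r + r' in hs.
have hE : (a - a') ^+ 2 + (b - b') ^+ 2 = s ^+ 2.
  have -> : s ^+ 2 = r ^+ 2 + r' ^+ 2 + 2 * r * r' by rewrite /s; ring.
  lra.
exists (Some (a + r / s * (a' - a), b + r / s * (b' - b))); split; first by case.
move=> [y1 y2] /=; split.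
- move=> [hC hD].
  set X1 := s * (y1 - a) - r * (a' - a).
  set Y1 := s * (y2 - b) - r * (b' - b).
  have : X1 ^+ 2 + Y1 ^+ 2 = s * r' * ((y1 - a) ^+ 2 + (y2 - b) ^+ 2 - r ^+ 2)
     - r * r' * ((a - a') ^+ 2 + (b - b') ^+ 2 - s ^+ 2)
     + r * s * ((y1 - a') ^+ 2 + (y2 - b') ^+ 2 - r' ^+ 2) by rewrite /X1 /Y1 /s; ring.
  rewrite hC hD hE !subrr !mulr0 subr0 addr0 => /sos0 [hX1 hY1].
  congr (_, _).
  + rewrite {1}(_ : y1 = X1 / s + (a + r / s * (a' - a))); first by rewrite hX1 mul0r add0r.
    by rewrite /X1; field.
  + rewrite {1}(_ : y2 = Y1 / s + (b + r / s * (b' - b))); first by rewrite hY1 mul0r add0r.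
    by rewrite /Y1; field.
- case=> -> ->; split.
  + have -> : (a + r / s * (a' - a) - a) ^+ 2 + (b + r / s * (b' - b) - b) ^+ 2
      = (r / s) ^+ 2 * ((a - a') ^+ 2 + (b - b') ^+ 2) by ring.
    by rewrite hE; field.
  + have -> : (a + r / s * (a' - a) - a') ^+ 2 + (b + r / s * (b' - b) - b') ^+ 2
      = (r' / s) ^+ 2 * ((a - a') ^+ 2 + (b - b') ^+ 2) by rewrite /s; field; rewrite -/s.
    by rewrite hE; field.
Qed.

Lemma TT_CL (a b r h1 h2 m : R) : r != 0 -> h1 ^+ 2 + h2 ^+ 2 = 1 ->
  a * h1 + b * h2 - m = - r -> tangent (OCirc a b r) (OLine h1 h2 m).
Proof.
move=> hr hv hX.
exists (Some (a + r * h1, b + r * h2)); split; first by case.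
move=> [y1 y2] /=; split.
- move=> [hC hL].
  have : (y1 - a - r * h1) ^+ 2 + (y2 - b - r * h2) ^+ 2 =
    ((y1 - a) ^+ 2 + (y2 - b) ^+ 2 - r ^+ 2) - 2 * r * (y1 * h1 + y2 * h2 - m)
    + 2 * r * (a * h1 + b * h2 - m + r) + r ^+ 2 * (h1 ^+ 2 + h2 ^+ 2 - 1) by ring.
  rewrite hC hL hX hv !subrr addNr !mulr0 subr0 !addr0 => /sos0 [e1 e2].
  congr (_, _); lra.
- case=> -> ->; split.
  + have -> : (a + r * h1 - a) ^+ 2 + (b + r * h2 - b) ^+ 2 = r ^+ 2 * (h1 ^+ 2 + h2 ^+ 2) by ring.
    by rewrite hv mulr1.
  + have -> : (a + r * h1) * h1 + (b + r * h2) * h2 = (a * h1 + b * h2 - m) + r * (h1 ^+ 2 + h2 ^+ 2) + m by ring.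
    by rewrite hv hX mulr1; ring.
Qed.

Lemma tangent_sym (C D : ocircle R) : tangent C D -> tangent D C.
Proof. by move=> [q hq]; exists q; apply: tanat_sym. Qed.

Lemma tanT (C D : ocircle R) : valid C -> valid D -> B (wv C) (wv D) = -1 ->
  wv C <> - wv D -> tangent C D.
Proof.
have key : forall a b r (L : ocircle R), r != 0 -> valid L -> B (wv (OCirc a b r)) (wv L) = -1 ->
  wv (OCirc a b r) <> - wv L -> tangent (OCirc a b r) L.
  move=> a b r [a' b' r'|h1 h2 m] hr /= hv h hn.
  - move: h; rewrite BCC // => /(congr1 (fun z => z * (2 * r * r'))).
    rewrite divfK; last by rewrite !mulf_neq0 ?two_neq0.
    rewrite mulNr mul1r => hX.
    have [hs|hs] := eqVneq (r + r') 0; last exact: TT_CC.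
    exfalso; apply: hn.
    have er : r' = - r by lra.
    have : (a - a') ^+ 2 + (b - b') ^+ 2 = 0 by rewrite er in hX; lra.
    move=> /sos0 [ea eb].
    have ea' : a' = a by lra.
    have eb' : b' = b by lra.
    rewrite ea' eb' er -[OCirc a b (- r)]/(reverse (OCirc a b r)) wv_rev opprK //.
  - move: h; rewrite BCL // => /(congr1 (fun z => z * r)).
    rewrite divfK // mulNr mul1r => hX; exact: TT_CL.
case: C => [a b r|h1 h2 m] hC hD h hn.
  exact: key.
case: D hD h hn => [a' b' r'|h1' h2' m'] hD h hn.
  apply: tangent_sym; apply: key => //; first by rewrite Bsym.
  by move=> e; apply: hn; rewrite e opprK.
move: h; rewrite BLL => h.
have : (h1 + h1') ^+ 2 + (h2 + h2') ^+ 2 = 0.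
  have -> : (h1 + h1') ^+ 2 + (h2 + h2') ^+ 2 =
    (h1 ^+ 2 + h2 ^+ 2) + (h1' ^+ 2 + h2' ^+ 2) + 2 * (h1 * h1' + h2 * h2') by ring.
  by rewrite hC hD h; ring.
move=> /sos0 [e1 e2].
have e1' : h1' = - h1 by lra.
have e2' : h2' = - h2 by lra.
have [em|em] := eqVneq m' (- m).
  exfalso; apply: hn.
  by rewrite e1' e2' em -[OLine (- h1) (- h2) (- m)]/(reverse (OLine h1 h2 m)) wv_rev opprK.
exists None => /=; split => //; split => // y [y1 y2].
apply/(negP em)/eqP; rewrite -y2 e1' e2' -y1; ring.
Qed.


Ltac ord4 x := case: (ord4_cases x) => [->|[->|[->|->]]].

Lemma three_zero (y : 'I_4 -> R) a b c : a != b -> a != c -> b != c ->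
  y a = 0 -> y b = 0 -> y c = 0 ->
  0 = 2 * \sum_k (y k) ^+ 2 - (\sum_k y k) ^+ 2 -> forall m, y m = 0.
Proof.
rewrite !sum4 => ab ac bc ya yb yc h m.
move: ab ac bc ya yb yc; ord4 a; ord4 b; ord4 c => // _ _ _ ya yb yc;
  rewrite ?ya ?yb ?yc in h; ord4 m; rewrite ?ya ?yb ?yc //; nra.
Qed.

Lemma disj_alg (y : 'I_4 -> R) i j : i != j ->
  0 = 2 * \sum_k (y k) ^+ 2 - (\sum_k y k) ^+ 2 ->
  (forall m, m != j -> y m <= 0) -> 0 < y j ->
  2 * (\sum_(l | l != i) y l) - y i <= 0.
Proof.
move=> ij h hm hj.
rewrite leNgt; apply/negP => hg.
have P1 : y i * (2 * (\sum_(l | l != i) y l) - y i) <= 0.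
  by rewrite mulr_le0_ge0 // ?hm // ltW.
have P2 : forall m, m != j -> y j * y m <= 0.
  by move=> m hmj; rewrite mulr_ge0_le0 // ?hm // ltW.
have P3 : 0 < y j * y j by rewrite mulr_gt0.
have P4 : forall m m', 0 <= (y m - y m') ^+ 2 by move=> m m'; apply: sqr_ge0.
move: P1; rewrite big_mkcond !sum4 in h * => P1.
move: ij hj hm P2 P3 hg P1; rewrite big_mkcond sum4; ord4 i; ord4 j => // _ hj hm P2 P3 hg P1;
  try have h0 := P2 o0 isT; try have h1 := P2 o1 isT; try have h2 := P2 o2 isT;
  try have h3 := P2 o3 isT;
  have q01 := P4 o0 o1; have q02 := P4 o0 o2; have q03 := P4 o0 o3;
  have q12 := P4 o1 o2; have q13 := P4 o1 o3; have q23 := P4 o2 o3;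
  rewrite /= ?addr0 ?add0r in P1 hg *; nra.
Qed.


Lemma third_idx (a b : 'I_4) : exists c, c != a /\ c != b.
Proof.
ord4 a; ord4 b; by [exists o0 | exists o1 | exists o2 | exists o3].
Qed.

Lemma set2_eq (a b k l : 'I_4) : a != b -> k != l ->
  (k == a) || (k == b) -> (l == a) || (l == b) -> [set a; b] = [set k; l].
Proof.
move=> ab kl /orP [/eqP ka|/eqP kb] /orP [/eqP la|/eqP lb]; subst.
- by rewrite eqxx in kl.
- by [].
- by rewrite setUC.
- by rewrite eqxx in kl.
Qed.

Lemma vecP4 (x z : vec) : cc x o0 = cc z o0 -> cc x o1 = cc z o1 -> cc x o2 = cc z o2 ->
  cc x o3 = cc z o3 -> x = z.
Proof.
move=> h0 h1 h2 h3; apply/rowP => j; ord4 j; [exact: h0|exact: h1|exact: h2|exact: h3].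
Qed.

Lemma exists_circ (w : vec) : B w w = 1 -> exists C : ocircle R, valid C /\ wv C = w.
Proof.
rewrite /B => hw.
have [b0|bn] := eqVneq (cc w o1) 0.
  exists (OLine (cc w o2) (cc w o3) (cc w o0 / 2)); split.
    by rewrite /= -hw b0 mulr0 mul0r addr0 mul0r subr0 !expr2.
  apply: vecP4; rewrite /cc !mxE /= -/(cc w _) ?b0 //. by field.
exists (OCirc (cc w o2 / cc w o1) (cc w o3 / cc w o1) (cc w o1)^-1); split.
  by rewrite /= invr_eq0.
apply: vecP4; rewrite /cc !mxE /= -!/(cc w _) ?invrK //.
- have hx : cc w o0 * cc w o1 = cc w o2 ^+ 2 + cc w o3 ^+ 2 - 1 by rewrite -hw; field.
  apply: (mulIf bn); rewrite hx; field; exact: bn.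
- by rewrite divfK.
- by rewrite divfK.
Qed.


Lemma desc_of_gram (E : 'I_4 -> ocircle R) : (forall k, valid (E k)) ->
  (forall a b, B (wv (E a)) (wv (E b)) = if a == b then 1 else -1) -> descartes E.
Proof.
move=> hv hg; split => //; split.
- move=> a b ab; apply: tanT => //; first by rewrite hg (negbTE ab).
  move=> he; have [c [ca cb]] := third_idx a b.
  have := hg a c; rewrite he BNl hg (eq_sym a c) (negbTE ca) (eq_sym b c) (negbTE cb).
  move=> h; have : (2 : R) = 0 by lra.
  by apply/eqP; rewrite two_neq0.
- move=> a b k l q q' ab kl ht1 ht2 eq; subst q'.
  set y := fun m => B (wv (E m)) (nv q).
  have rel : 0 = 2 * \sum_k (y k) ^+ 2 - (\sum_k y k) ^+ 2.
    by rewrite -(L2 hg) nv_null mulr0.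
  have [ya yb] := tanat_B (hv a) (hv b) ht1.
  have [yk yl] := tanat_B (hv k) (hv l) ht2.
  have bad : forall c, c != a -> c != b -> y c = 0 -> False.
    move=> c ca cb yc.
    have ac : a != c by rewrite eq_sym.
    have bc : b != c by rewrite eq_sym.
    have all0 := three_zero ab ac bc ya yb yc rel.
    have := L1 hg all0.
    by move/eqP; rewrite (negbTE (nv_neq0 q)).
  case: (boolP ((k == a) || (k == b))) => hk; last first.
    by exfalso; move: hk; rewrite negb_or => /andP [ka kb]; apply: (bad k).
  case: (boolP ((l == a) || (l == b))) => hl; last first.
    by exfalso; move: hl; rewrite negb_or => /andP [la lb]; apply: (bad l).
  exact: set2_eq.
Qed.


Lemma Bsumr (I : Type) (r : seq I) (P : pred I) (F : I -> vec) z :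
  B z (\sum_(l <- r | P l) F l) = \sum_(l <- r | P l) B z (F l).
Proof. by rewrite Bsym Bsuml; apply: eq_bigr => l _; rewrite Bsym. Qed.
Lemma BZr a x z : B z (a *: x) = a * B z x.
Proof. by rewrite Bsym BZl Bsym. Qed.

Lemma sumG (i k : 'I_4) : 2 * (\sum_(l | l != i) (if k == l then (1:R) else -1))
   - (if k == i then 1 else -1) = if k == i then -7 else -1.
Proof. rewrite big_mkcond sum4; ord4 i; ord4 k => /=; lra. Qed.

Lemma sumIf (i : 'I_4) (u v : R) : \sum_k (if k == i then u else v) = u + 3 * v.
Proof. rewrite sum4; ord4 i => /=; lra. Qed.


Section Main.
Variable D : 'I_4 -> ocircle R.
Variable i : 'I_4.
Hypothesis hD : oriented_descartes D.

Let gD := gram_OD hD.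

Definition w2 : vec := 2 *: (\sum_(l | l != i) wv (D l)) - wv (D i).

Lemma Bfw k : B (wv (D k)) w2 = if k == i then -7 else -1.
Proof.
rewrite /w2 BBr BZr Bsumr.
under eq_bigr => l _ do rewrite gD.
by rewrite gD sumG.
Qed.

Lemma Bw2n n : B w2 n = 2 * (\sum_(l | l != i) B (wv (D l)) n) - B (wv (D i)) n.
Proof. by rewrite /w2 BBl BZl Bsuml. Qed.

Lemma Bww : B w2 w2 = 1.
Proof.
have := L2 gD w2.
under eq_bigr => k _ do rewrite Bfw.
under [X in _ - X ^+ 2]eq_bigr => k _ do rewrite Bfw.
have -> : \sum_k (if k == i then -7 else -1 : R) ^+ 2 = \sum_k (if k == i then 49 else 1 : R).
  by apply: eq_bigr => k _; case: (k == i) => /=; ring.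
rewrite !sumIf => h; lra.
Qed.

Lemma relp q : 0 = 2 * \sum_k (B (wv (D k)) (nv q)) ^+ 2 - (\sum_k B (wv (D k)) (nv q)) ^+ 2.
Proof. by rewrite -(L2 gD) nv_null mulr0. Qed.

Lemma neq_sym (a b : 'I_4) : a != b -> b != a.
Proof. by rewrite eq_sym. Qed.

Lemma key_disj (y : 'I_4 -> R) j : j != i ->
  0 = 2 * \sum_k (y k) ^+ 2 - (\sum_k y k) ^+ 2 ->
  (forall m m', m != m' -> 0 < y m -> 0 < y m' -> False) ->
  0 < y j -> 0 < 2 * (\sum_(l | l != i) y l) - y i -> False.
Proof.
move=> ji rel hd hj hw.
have hm : forall m, m != j -> y m <= 0.
  by move=> m mj; rewrite leNgt; apply/negP => hp; apply: (hd m j mj).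
have := disj_alg (neq_sym ji) rel hm hj.
by rewrite leNgt hw.
Qed.

Lemma exist_part : exists C', is_reflected D i C'.
Proof.
have [C2 [hv2 hw2]] := exists_circ Bww.
set E := replace D i C2.
have wvE : forall k, wv (E k) = if k == i then w2 else wv (D k).
  by move=> k; rewrite /E /replace; case: ifP => _; rewrite ?hw2.
have hvE : forall k, valid (E k).
  by move=> k; rewrite /E /replace; case: ifP => _ //; exact: hD.1.1 k.
have gE : forall a b, B (wv (E a)) (wv (E b)) = if a == b then 1 else -1.
  move=> a b; rewrite !wvE.
  have [ea|ai] := eqVneq a i; have [eb|bi] := eqVneq b i.
  - by subst; rewrite Bww eqxx.
  - by subst; rewrite Bsym Bfw (negbTE bi) eq_sym (negbTE bi).
  - by subst; rewrite Bfw (negbTE ai).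
  - exact: gD.
have dE : descartes E := desc_of_gram hvE gE.
have relz : forall p, let y := fun m => B (wv (D m)) (nv (Some p)) in
    0 = 2 * \sum_k (- y k) ^+ 2 - (\sum_k - y k) ^+ 2.
  move=> p y; rewrite sumrN sqrrN.
  under eq_bigr => k _ do rewrite sqrrN.
  exact: relp.
have oE : oriented_descartes E.
  split => //; case: hD => _ [hd|hd]; [left|right] => a b ab p [Ia Ib].
  - have hvD := hD.1.1.
    set y := fun m => B (wv (D m)) (nv (Some p)).
    have Dpos : forall m m', m != m' -> 0 < y m -> 0 < y m' -> False.
      by move=> m m' mm' h1 h2; apply: (hd m m' mm' p); split; apply/interior_B.
    move/(interior_B p (hvE a)): Ia; move/(interior_B p (hvE b)): Ib.
    rewrite !wvE.
    have [ea|ai] := eqVneq a i; have [eb|bi] := eqVneq b i; rewrite /= ?Bw2n.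
    + by subst; rewrite eqxx in ab.
    + by move=> h1 h2; apply: (key_disj bi (relp _) Dpos h1 h2).
    + by move=> h1 h2; apply: (key_disj ai (relp _) Dpos h2 h1).
    + by move=> h1 h2; apply: (Dpos a b ab h2 h1).
  - have hvD := hD.1.1.
    set y := fun m => - B (wv (D m)) (nv (Some p)).
    have Dpos : forall m m', m != m' -> 0 < y m -> 0 < y m' -> False.
      move=> m m' mm' h1 h2; apply: (hd m m' mm' p); split; apply/interior_rev_B => //;
        by rewrite -oppr_gt0.
    move/(interior_rev_B p (hvE a)): Ia; move/(interior_rev_B p (hvE b)): Ib.
    rewrite !wvE.
    have hz : forall u : R, u < 0 -> 0 < - u by move=> u hu; lra.
    have hw : forall t : R, 2 * (\sum_(l | l != i) B (wv (D l)) (nv (Some p))) - B (wv (D i)) (nv (Some p)) < 0 ->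
      0 < 2 * (\sum_(l | l != i) y l) - y i.
      by move=> t h; rewrite /y sumrN; lra.
    have [ea|ai] := eqVneq a i; have [eb|bi] := eqVneq b i; rewrite /= ?Bw2n.
    + by subst; rewrite eqxx in ab.
    + by move=> h1 h2; apply: (key_disj bi (relz p) Dpos (hz _ h1) (hw 0 h2)).
    + by move=> h1 h2; apply: (key_disj ai (relz p) Dpos (hz _ h2) (hw 0 h1)).
    + by move=> h1 h2; apply: (Dpos a b ab (hz _ h2) (hz _ h1)).
exists C2; split => //; split.
  have [p hp] := on_exists hv2.
  exists p => heq.
  have hpi : on (D i) p by rewrite -heq.
  move/(on_B p hv2): hp; rewrite hw2 Bw2n.
  move/(on_B p (hD.1.1 i)): hpi => hyi.
  rewrite hyi subr0 => /eqP; rewrite mulf_eq0 (negbTE two_neq0) /= => /eqP hs.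
  have hsum : \sum_k B (wv (D k)) (nv (Some p)) = 0.
    by rewrite (bigD1 i) //= hyi hs addr0.
  have := relp (Some p); rewrite hsum expr0n /= subr0 => /esym /eqP.
  rewrite mulf_eq0 (negbTE two_neq0) /= => /eqP hsq.
  have all0 : forall k, B (wv (D k)) (nv (Some p)) = 0.
    move=> k; apply/eqP; rewrite -sqrf_eq0; apply/eqP.
    by apply: (psumr_eq0P _ hsq) => // l _; apply: sqr_ge0.
  have := L1 gD all0.
  by move/eqP; rewrite (negbTE (nv_neq0 _)).
split.
  move=> j ji; have := dE.2.1 i j (neq_sym ji).
  by rewrite /E /replace eqxx (negbTE ji).
split => //.
move=> j k l q q' ji ki li kl hq hq' eq; subst q'.
have hq2 : tangent_at (E i) (E j) q by rewrite /E /replace eqxx (negbTE ji).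
have hq3 : tangent_at (E k) (E l) q by rewrite /E /replace (negbTE ki) (negbTE li).
have := dE.2.2 i j k l q q (neq_sym ji) kl hq2 hq3 erefl.
move=> hs; have := set21 i j; rewrite hs !inE => /orP [/eqP ik|/eqP il].
  by rewrite ik eqxx in ki.
by rewrite il eqxx in li.
Qed.

Lemma uniq_part C' : is_reflected D i C' -> Wmx (replace D i C') = Smx R i *m Wmx D.
Proof.
move=> [hv' [[p hp] [_ [_ hE]]]].
have gE := gram_OD hE.
set E := replace D i C' in gE *.
have wvE : forall k, wv (E k) = if k == i then wv C' else wv (D k).
  by move=> k; rewrite /E /replace; case: ifP.
have hyk : forall k, B (wv (D k)) (wv C') = if k == i then B (wv (D i)) (wv C') else -1.
  move=> k; have [->|ki] := eqVneq k i => //.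
  by have := gE k i; rewrite !wvE eqxx (negbTE ki).
set t := B (wv (D i)) (wv C') in hyk.
have ht : (t - 1) * (t + 7) = 0.
  have := L2 gD (wv C'); rewrite Bself //.
  under eq_bigr => k _ do rewrite hyk.
  under [X in _ - X ^+ 2]eq_bigr => k _ do rewrite hyk.
  have -> : \sum_k (if k == i then t else -1) ^+ 2 = \sum_k (if k == i then t ^+ 2 else 1).
    by apply: eq_bigr => k _; case: (k == i) => //=; ring.
  rewrite !sumIf => h.
  have -> : (t - 1) * (t + 7) = t ^+ 2 + 6 * t - 7 by ring.
  nra.
have hw : wv C' = w2.
  move/eqP: ht; rewrite mulf_eq0 => /orP [/eqP t1|/eqP t7].
    exfalso.
    have e : wv C' = wv (D i).
      apply/eqP; rewrite -subr_eq0; apply/eqP; apply: (L1 gD) => k.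
      rewrite BBr hyk gD; case: (k == i); lra.
    have := wv_inj hv' (hD.1.1 i) e => eC.
    by apply: hp; rewrite eC.
  apply/eqP; rewrite -subr_eq0; apply/eqP; apply: (L1 gD) => k.
  rewrite BBr hyk Bfw; case: (k == i); lra.
apply/matrixP => a c; rewrite !mxE.
under eq_bigr => l _ do rewrite !mxE.
have Fe : forall C : ocircle R, nth 0 (wvec C) c = wv C ord0 c by move=> C; rewrite mxE.
have [ea|ai] := eqVneq a i.
  subst a; rewrite /E /replace eqxx Fe hw /w2 !mxE summxE.
  rewrite [RHS](bigD1 i) //= eqxx.
  under [X in _ = _ + X]eq_bigr => l li do rewrite (negbTE li) Fe.
  rewrite -mulr_sumr Fe; ring.
rewrite /E /replace (negbTE ai).
rewrite (bigD1 a) //= eqxx mul1r big1 ?addr0 // => l la.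
by rewrite eq_sym (negbTE la) mul0r.
Qed.

End Main.


End S.

Unset Implicit Arguments.

Theorem mainTheorem3 (R : realType) (D : 'I_4 -> ocircle R) (i : 'I_4) :
  oriented_descartes D ->
  (exists C' : ocircle R, is_reflected D i C') /\
  (forall C' : ocircle R, is_reflected D i C' ->
     Wmx (replace D i C') = Smx R i *m Wmx D).
Proof.
move=> hD; split; first exact: exist_part.
by move=> C' h; apply: uniq_part.
Qed.
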